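(* For any $s,g$, every graph $G=(V,E)$ satisfying $S(s,g)$ has the following property: for every $D\subseteq V$ with $|D|\le \frac{gs}{4}$ there exists a set $Z\subseteq V$ with $|Z|\le \frac{2|D|}{s}$ such that the induced graph $G[V\setminus(D\cup Z)]$ satisfies $S\left(\frac{s}{2},\frac{g}{2}\right)$.
   Context: For a graph $H$ and $A\subseteq V(H)$, $N_H(A)$ is the set of vertices of $H$ outside $A$ having at least one neighbor in $A$. $H$ satisfies $S(s,g)$ if every $A\subseteq V(H)$ with $|A|\le g$ has $|N_H(A)|\ge s|A|$ (for an induced subgraph, neighborhoods are taken inside that subgraph). *)

(* Defs.v *)
(* A simple graph on a finite vertex type T is a symmetric,
   irreflexive relation e : rel T. *)
From mathcomp Require Import all_boot all_order all_algebra.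
Set Implicit Arguments. Unset Strict Implicit. Unset Printing Implicit Defensive.
Import Order.TTheory GRing.Theory Num.Theory.
Local Open Scope ring_scope.

Definition nbhd (T : finType) (e : rel T) (W A : {set T}) : {set T} :=
  [set v in W :\: A | [exists u in A, e u v]].

Definition expands (R : realFieldType) (T : finType) (e : rel T)
    (W : {set T}) (s g : R) : Prop :=
  forall A : {set T}, A \subset W -> (#|A|%:R <= g) ->
    s * #|A|%:R <= (#|nbhd e W A|)%:R.

(* Main.v *)
Require Import Defs.
From mathcomp Require Import all_boot all_order all_algebra.
From mathcomp Require Import lra.
Import Order.TTheory GRing.Theory Num.Theory.
Local Open Scope ring_scope.

Lemma nb_full (T : finType) (e : rel T) (D Z : {set T}) :
  Z \subset ~: D ->
  (#|nbhd e [set: T] Z| <= #|nbhd e (~: D) Z| + #|D|)%N.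
Proof.
move=> sZ; apply: leq_trans (leq_card_setU _ _).
apply: subset_leq_card; apply/subsetP => v.
rewrite !inE /= => /andP[/andP[vZ _] ex].
case vD: (v \in D); first by rewrite orbT.
by rewrite /= andbT ex andbT orbF.
Qed.

Lemma nb_union (T : finType) (e : rel T) (D Z A : {set T}) :
  (#|nbhd e (~: D) (Z :|: A)| <= #|nbhd e (~: D) Z| + #|nbhd e (~: (D :|: Z)) A|)%N.
Proof.
apply: leq_trans (leq_card_setU _ _).
apply: subset_leq_card; apply/subsetP => v.
rewrite !inE /= => /andP[/andP[vZA vD] /existsP[u /andP[uZA euv]]].
rewrite negb_or in vZA; case/andP: vZA => vZ vA.
move: uZA; rewrite inE => /orP[uZ|uA].
  by rewrite (negbTE vZ) (negbTE vD) /=; apply/orP; left; apply/existsP; exists u; rewrite uZ.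
apply/orP; right; rewrite (negbTE vZ) (negbTE vD) (negbTE vA) /=; apply/existsP; exists u; by rewrite uA.
Qed.

Theorem lemma2p2 (R : realFieldType) (T : finType) (e : rel T) (s g : R) :
  0 < s -> 0 < g -> symmetric e -> irreflexive e ->
  expands e [set: T] s g ->
  forall D : {set T}, #|D|%:R <= g * s / 4 ->
  exists Z : {set T},
    #|Z|%:R <= 2 * #|D|%:R / s /\
    expands e (~: (D :|: Z)) (s / 2) (g / 2).
Proof.
move=> s0 g0 _ _ H D HD.
pose P := fun Z : {set T} => [&& Z \subset ~: D, (#|Z|%:R <= g)
   & 2 * (#|nbhd e (~: D) Z|)%:R <= s * #|Z|%:R].
have P0 : P set0.
  rewrite /P sub0set cards0 /= ltW //=.
  have -> : nbhd e (~: D) set0 = set0.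
    apply/setP => v; rewrite [in RHS]inE [in LHS]inE; apply/negbTE/negP => /andP[_ /existsP[u]]; by rewrite inE.
  by rewrite cards0 !mulr0.
case: (@arg_maxnP _ set0 P (fun Z : {set T} => #|Z|) P0) => Z PZ Zmax.
case/and3P: PZ => sZ Zg HZ.
have HNZ := H Z (subsetT _) Zg.
have Hf := @nb_full _ e D Z sZ.
have Hf' : (#|nbhd e [set: T] Z|%:R <= (#|nbhd e (~: D) Z|)%:R + #|D|%:R :> R).
  by rewrite -natrD ler_nat.
have Zb : #|Z|%:R <= 2 * #|D|%:R / s.
  rewrite ler_pdivlMr //; lra.
have Zb2 : #|Z|%:R <= g / 2.
  apply: le_trans Zb _; rewrite ler_pdivrMr //.
  have : 2 * #|D|%:R <= 2 * (g * s / 4) by rewrite ler_pM2l.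
  move=> h; apply: le_trans h _; lra.
exists Z; split=> // A sA Ag.
set a := #|A|%:R; set nA := (#|nbhd e (~: (D :|: Z)) A|)%:R.
case: (leP (s / 2 * a) nA) => // hlt.
have dZA : [disjoint Z & A].
  rewrite disjoint_sym disjoint_subset; apply/subsetP => x /(subsetP sA).
  by rewrite !inE negb_or => /andP[_ ->].
have cZA : #|Z :|: A| = (#|Z| + #|A|)%N.
  by move: dZA; rewrite -setI_eq0 cardsU => /eqP ->; rewrite cards0 subn0.
have PZA : P (Z :|: A).
  apply/and3P; split.
  - rewrite subUset sZ; apply/subsetP => x /(subsetP sA); by rewrite !inE negb_or => /andP[-> _].
  - rewrite cZA natrD; rewrite -/a; lra.
  - have hu := @nb_union _ e D Z A.
    have hu' : (#|nbhd e (~: D) (Z :|: A)|)%:R <= (#|nbhd e (~: D) Z|)%:R + nA :> R.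
      by rewrite -natrD ler_nat.
    rewrite cZA natrD -/a.
    have : 2 * nA <= s * a by lra.
    move=> h; rewrite mulrDr; lra.
have hm := Zmax _ PZA.
have A0 : #|A| = 0%N.
  move: hm; rewrite cZA /= => hm; apply/eqP; rewrite -leqn0 -(leq_add2l #|Z|) addn0; exact hm.
have : a = 0 by rewrite /a A0.
move=> a0; rewrite a0 mulr0 in hlt; have : 0 <= nA by rewrite ler0n.
by move=> h; move: (le_lt_trans h hlt); rewrite ltxx.
Qed.
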